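(* Assume the setting described in the context, so in particular $\tilde\lambda_{s,k}\neq1$ for $s=a,b$ and all $k=1,\dots,d$. Fix $j\in\{1,\dots,d\}$ and integers $L\ge\ell\ge2$, and let $0\le m<n$ be integers with $n-m\ge2$. Put $\Lambda'=\Lambda^{(j)}_n\setminus\Lambda^{(j)}_m$. Then $$C(\Lambda',ab)\le C(\Lambda',a)\,C(\Lambda',b)\le \tilde c\,C(\Lambda',ab),$$ where $$\tilde c:=\Bigl(1-\prod_{k=1}^d\bigl(\max\{1+e^{-2|\log\tilde\lambda_{a,k}|},\,1+e^{-2|\log\tilde\lambda_{b,k}|}\}\bigr)^{-1}\Bigr)^{-1}.$$
   Context: Let $\lambda_{s,k}>0$ ($s\in\{a,b\}$, $k=1,\dots,d$), $\lambda_s^x:=\prod_k\lambda_{s,k}^{x_k}$ for $x\in\mathbb{Z}^d$, and for finite $\Lambda\subset\mathbb{Z}^d$ let $C(\Lambda,s):=\sum_{x\in\Lambda}\lambda_s^{2x}$ and $C(\Lambda,ab):=\sum_{x,y\in\Lambda,\,x\neq y}\lambda_a^{2x}\lambda_b^{2y}$. Volumes $\Lambda_{\vec L}$, $\vec L=(L_1,\dots,L_d)\in\mathbb{N}^d$, are defined in one of two ways. Case 1 ($\lambda_{a,1}\ne1$, $\lambda_{b,1}\ne1$): choose integers $v(k)\ge0$, $k=2,\dots,d$, with $\tilde\lambda_{s,k}:=\lambda_{s,k}\lambda_{s,1}^{-v(k)}\ne1$ for $s=a,b$, set $\tilde\lambda_{s,1}:=\lambda_{s,1}$, and $\Lambda_{\vec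 L}:=\{x\in\mathbb{Z}^d: 0\le x_1+\sum_{k\ge2}v(k)x_k\le L_1-1,\ 0\le x_k\le L_k-1\ (k\ge2)\}$. Case 2 ($d\ge2$, $\lambda_{a,1}\ne1$, $\lambda_{b,2}\ne1$, $\lambda_{a,2}=\lambda_{b,1}=1$): set $\tilde\lambda_{a,1}:=\lambda_{a,1}$, $\tilde\lambda_{a,2}:=\lambda_{a,1}^{-1}$, $\tilde\lambda_{b,1}=\tilde\lambda_{b,2}:=\lambda_{b,2}$, choose integers $v(k)\ge0$, $k\ge3$, with $\tilde\lambda_{s,k}:=\lambda_{s,k}\tilde\lambda_{s,1}^{-v(k)}\ne1$, and $\Lambda_{\vec L}:=\{x\in\mathbb{Z}^d: 0\le \tfrac{x_1+x_2}{2}+\sum_{k\ge3}v(k)x_k\le L_1-\tfrac12,\ 0\le\tfrac{x_2-x_1}{2}\le L_2-\tfrac12,\ 0\le x_k\le L_k-1\ (k\ge3)\}$. For fixed $j$, $L$, $\ell$ and integer $n\ge0$, $\Lambda^{(j)}_n:=\Lambda_{(L,\dots,L,n,\ell,\dots,\ell)}$ with $n$ in the $j$-th entry, $L$ in entries $<j$ and $\ell$ in entries $>j$ (so $\Lambda^{(j)}_0=\emptyset$). *)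

(* Defs.v *)
From HB Require Import structures.
From mathcomp Require Import all_boot all_order all_algebra.
From mathcomp Require Import boolp classical_sets fsbigop reals sequences exp.
Set Implicit Arguments. Unset Strict Implicit. Unset Printing Implicit Defensive.
Import Order.TTheory GRing.Theory Num.Theory.
Local Open Scope ring_scope.
Local Open Scope classical_set_scope.

(* Conventions: coordinates are 1-based, k = 1..d.
   The parameters lambda_{a,k}, lambda_{b,k} are given as functions
   la lb : nat -> R (only k = 1..d matter), v : nat -> nat (only k >= 2 in
   Case 1 / k >= 3 in Case 2 matter). *)

Definition coord (d : nat) (x : d.-tuple int) (k : nat) : int := nth 0 x k.-1.

Definition lpow (R : realType) (d : nat) (l : nat -> R) (x : d.-tuple int) : R :=
  \prod_(1 <= k < d.+1) (l k) ^ (coord x k).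

Definition Cs (R : realType) (d : nat) (l : nat -> R) (Lam : set (d.-tuple int)) : R :=
  \sum_(x \in Lam) lpow l x ^+ 2.

Definition Cab (R : realType) (d : nat) (la lb : nat -> R)
    (Lam : set (d.-tuple int)) : R :=
  \sum_(x \in Lam) \sum_(y \in Lam `\ x) (lpow la x ^+ 2 * lpow lb y ^+ 2).

(* The two cases of the setting: case2 = false is Case 1, case2 = true is
   Case 2. *)

Definition tl1 (R : realType) (case2 : bool) (l : nat -> R) (s_is_b : bool) : R :=
  if case2 && s_is_b then l 2%N else l 1%N.

Definition tl (R : realType) (case2 : bool) (v : nat -> nat) (l : nat -> R)
    (s_is_b : bool) (k : nat) : R :=
  if ~~ case2 then
    (if k == 1%N then l 1%N else l k * (l 1%N) ^- (v k))
  else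
    (if k == 1%N then tl1 case2 l s_is_b
     else if k == 2%N then (if s_is_b then l 2%N else (l 1%N)^-1)
     else l k * (tl1 case2 l s_is_b) ^- (v k)).

Definition setting (R : realType) (d : nat) (case2 : bool) (v : nat -> nat)
    (la lb : nat -> R) : Prop :=
  (1 <= d)%N /\
  (forall k, (1 <= k <= d)%N -> 0 < la k /\ 0 < lb k) /\
  if ~~ case2 then
    la 1%N != 1 /\ lb 1%N != 1 /\
    (forall k, (2 <= k <= d)%N -> tl case2 v la false k != 1 /\ tl case2 v lb true k != 1)
  else
    (2 <= d)%N /\ la 1%N != 1 /\ lb 2%N != 1 /\ la 2%N = 1 /\ lb 1%N = 1 /\
    (forall k, (3 <= k <= d)%N -> tl case2 v la false k != 1 /\ tl case2 v lb true k != 1).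

Definition Vol (R : realType) (d : nat) (case2 : bool) (v : nat -> nat)
    (Lv : nat -> nat) : set (d.-tuple int) :=
  if ~~ case2 then
    [set x | (0 <= coord x 1 + \sum_(2 <= k < d.+1) (v k)%:Z * coord x k)%R /\
             (coord x 1 + \sum_(2 <= k < d.+1) (v k)%:Z * coord x k <= (Lv 1%N)%:Z - 1)%R /\
             (forall k, (2 <= k <= d)%N ->
                 (0 <= coord x k)%R /\ (coord x k <= (Lv k)%:Z - 1)%R)]
  else
    [set x | (0 <= ((coord x 1)%:~R + (coord x 2)%:~R) / 2
                  + \sum_(3 <= k < d.+1) (v k)%:R * (coord x k)%:~R :> R)%R /\
             (((coord x 1)%:~R + (coord x 2)%:~R) / 2
                  + \sum_(3 <= k < d.+1) (v k)%:R * (coord x k)%:~R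
                <= (Lv 1%N)%:R - 2^-1 :> R)%R /\
             (0 <= ((coord x 2)%:~R - (coord x 1)%:~R) / 2 :> R)%R /\
             (((coord x 2)%:~R - (coord x 1)%:~R) / 2 <= (Lv 2%N)%:R - 2^-1 :> R)%R /\
             (forall k, (3 <= k <= d)%N ->
                 (0 <= coord x k)%R /\ (coord x k <= (Lv k)%:Z - 1)%R)].

Definition Lvec (j L l n : nat) (k : nat) : nat :=
  if (k < j)%N then L else if k == j then n else l.

Definition Volj (R : realType) (d : nat) (case2 : bool) (v : nat -> nat)
    (j L l n : nat) : set (d.-tuple int) :=
  @Vol R d case2 v (Lvec j L l n).

Definition ctilde (R : realType) (d : nat) (case2 : bool) (v : nat -> nat)
    (la lb : nat -> R) : R :=
  (1 - \prod_(1 <= k < d.+1)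
         (Num.max (1 + expR (- 2 * `|ln (tl case2 v la false k)|))
                  (1 + expR (- 2 * `|ln (tl case2 v lb true k)|)))^-1)^-1.

(* Main.v *)
From HB Require Import structures.
From mathcomp Require Import all_boot all_order all_algebra.
From mathcomp Require Import boolp classical_sets fsbigop reals sequences exp.
From mathcomp Require Import functions cardinality.
From mathcomp Require Import zify ring lra.
Require Import Defs.
Import Order.TTheory GRing.Theory Num.Theory.
Local Open Scope ring_scope.
Local Open Scope classical_set_scope.
Lemma sum_two (R : realType) N (Q : pred nat) (F : nat -> R) (s t : nat) :
  (forall u, 0 <= F u) -> s != t -> (s < N)%N -> (t < N)%N -> Q s -> Q t ->
  F s + F t <= \sum_(u < N | Q u) F u.
Proof.
move=> F0 st sN tN Qs Qt.
rewrite (bigD1 (Ordinal sN)) //= lerD2l.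
rewrite (bigD1 (Ordinal tN)) /=; last by rewrite Qt -val_eqE /= eq_sym.
by rewrite lerDl sumr_ge0.
Qed.

Lemma oneD (R : realType) (N lo hi : nat) (al be ga : R) :
  0 < al -> 0 < be -> ga <= al -> ga <= al^-1 -> (lo < hi)%N -> (hi < N)%N ->
  (1 + ga) * \sum_(u < N | (lo <= u <= hi)%N) (al ^+ u * be ^+ u) <=
  (\sum_(u < N | (lo <= u <= hi)%N) al ^+ u) * (\sum_(u < N | (lo <= u <= hi)%N) be ^+ u).
Proof.
move=> al0 be0 gal gali lohi hiN.
rewrite [X in X <= _]mulr_sumr [X in _ <= X]mulr_sumr; apply: ler_sum => -[u uN'] /= /andP[lou uhi].
rewrite mulrA; apply: ler_wpM2r; first by rewrite exprn_ge0 // ltW.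
have uN : (u < N)%N by apply: leq_ltn_trans hiN.
have F0 : forall w, 0 <= al ^+ w by move=> w; rewrite exprn_ge0 // ltW.
rewrite mulrDl mul1r.
case: (ltnP u hi) => uh.
  have := @sum_two R N (fun w => (lo <= w <= hi)%N) (fun w => al ^+ w) u u.+1 F0.
  rewrite neq_ltn ltnSn uN /= lou uhi (leq_trans lou) // uh (leq_ltn_trans uh hiN).
  move=> /(_ isT isT isT isT isT); apply: le_trans.
  by rewrite lerD2l exprS ler_wpM2r.
have eu : u = hi by apply/eqP; rewrite eqn_leq uhi uh.
have lo1 : (lo <= hi.-1)%N by rewrite -ltnS prednK // (leq_ltn_trans _ lohi).
have := @sum_two R N (fun w => (lo <= w <= hi)%N) (fun w => al ^+ w) u hi.-1 F0.
rewrite eu neq_ltn ltn_predL (leq_ltn_trans _ lohi) // hiN leqnn (leq_ltn_trans (leq_pred _) hiN) /= lo1 leq_pred (leq_trans lou) // orbT.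
move=> /(_ isT isT isT isT isT); apply: le_trans.
rewrite lerD2l -{1}(prednK (leq_ltn_trans (leq0n lo) lohi)) exprS mulrA.
rewrite -[X in _ <= X]mul1r ler_wpM2r //.
by rewrite -(mulVf (lt0r_neq0 al0)) ler_wpM2r // ltW.
Qed.
Lemma prod_family (R : realType) d N (Q : 'I_d -> pred nat) (W : 'I_d -> nat -> R) :
  \sum_(f : {ffun 'I_d -> 'I_N} | [forall i, Q i (f i)]) \prod_i W i (f i) =
  \prod_i \sum_(t < N | Q i t) W i t.
Proof.
rewrite (bigA_distr_big_dep (fun i (t : 'I_N) => Q i t) (fun i (t : 'I_N) => W i t)) /=.
by apply: eq_bigl => f; apply/forallP/familyP => H i; have := H i.
Qed.

Lemma box_ineq (R : realType) d N (Q : 'I_d -> pred nat) (Wa Wb : 'I_d -> nat -> R)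
  (c : 'I_d -> R) :
  (forall i, 0 <= c i) -> (forall i t, 0 <= Wa i t) -> (forall i t, 0 <= Wb i t) ->
  (forall i, c i * \sum_(t < N | Q i t) (Wa i t * Wb i t) <=
        (\sum_(t < N | Q i t) Wa i t) * (\sum_(t < N | Q i t) Wb i t)) ->
  (\prod_i c i) * \sum_(f : {ffun 'I_d -> 'I_N} | [forall i, Q i (f i)])
       ((\prod_i Wa i (f i)) * (\prod_i Wb i (f i))) <=
  (\sum_(f : {ffun 'I_d -> 'I_N} | [forall i, Q i (f i)]) \prod_i Wa i (f i)) *
  (\sum_(f : {ffun 'I_d -> 'I_N} | [forall i, Q i (f i)]) \prod_i Wb i (f i)).
Proof.
move=> c0 Wa0 Wb0 H.
rewrite [X in _ * X <= _](eq_bigr (fun f : {ffun 'I_d -> 'I_N} => \prod_i (Wa i (f i) * Wb i (f i)))); last by move=> f _; rewrite big_split.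
rewrite !prod_family (@prod_family R d N Q (fun i t => Wa i t * Wb i t)) -!big_split /=.
apply: ler_prod => i _; rewrite H andbT mulr_ge0 // sumr_ge0 // => t _.
by rewrite mulr_ge0.
Qed.
Lemma gamma_le (R : realType) (t : R) : 0 < t ->
  expR (- 2 * `|ln t|) <= t ^+ 2 /\ expR (- 2 * `|ln t|) <= (t ^+ 2)^-1.
Proof.
move=> t0.
have e2 : t ^+ 2 = expR (ln t + ln t) by rewrite expRD lnK ?expr2 // posrE.
rewrite e2 -expRN !ler_expR; split.
  by case: (ler0P (ln t)) => H; lra.
by case: (ler0P (ln t)) => H; lra.
Qed.

Lemma one_coord (R : realType) N (q : pred nat) lo hi (ta tb : R) :
  0 < ta -> 0 < tb -> (lo < hi)%N -> (hi < N)%N -> q =1 (fun t => lo <= t <= hi)%N ->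
  Num.max (1 + expR (- 2 * `|ln ta|)) (1 + expR (- 2 * `|ln tb|)) *
    \sum_(t < N | q t) ((ta ^+ 2) ^+ t * (tb ^+ 2) ^+ t) <=
  (\sum_(t < N | q t) (ta ^+ 2) ^+ t) * (\sum_(t < N | q t) (tb ^+ 2) ^+ t).
Proof.
move=> ta0 tb0 lohi hiN qE.
rewrite !(eq_bigl _ _ (fun t : 'I_N => qE t)).
have [ga1 ga2] := @gamma_le R ta ta0; have [gb1 gb2] := @gamma_le R tb tb0.
case: (leP (1 + expR (- 2 * `|ln ta|)) (1 + expR (- 2 * `|ln tb|))) => _.
  rewrite [X in _ <= X]mulrC; under eq_bigr do rewrite mulrC.
  by apply: (@oneD R N lo hi) => //; apply: exprn_gt0.
by apply: (@oneD R N lo hi) => //; apply: exprn_gt0.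
Qed.
Local Open Scope ring_scope.
Lemma cab_formula (R : realType) (T : choiceType) (A : set T) (a b : T -> R) :
  finite_set A ->
  \sum_(x \in A) \sum_(y \in A `\ x) (a x * b y) =
  (\sum_(x \in A) a x) * (\sum_(y \in A) b y) - \sum_(x \in A) (a x * b x).
Proof.
move=> finA.
rewrite (eq_fsbigr (fun x => \sum_(y \in A) (a x * b y) - a x * b x)); last first.
  move=> x /set_mem Ax; rewrite (fsbigD1 x A) //.
  by rewrite [RHS]addrC [RHS]addKr.

rewrite !fsbig_finite //= sumrB; congr (_ - _).
by rewrite mulr_suml; apply: eq_bigr => x _; rewrite mulr_sumr fsbig_finite.
Qed.

Lemma reindex_box (R : realType) (I : finType) (T : choiceType) (Pb : pred I)
   (h : I -> T) (A : set T) (F : T -> R) :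
  A = h @` [set i | Pb i] ->
  (forall p q, Pb p -> Pb q -> h p = h q -> p = q) ->
  \sum_(x \in A) F x = \sum_(i | Pb i) F (h i).
Proof.
move=> -> hinj; rewrite fsbig_image; last first.
  by move=> p q /set_mem Pp /set_mem Pq; apply: hinj.
rewrite -(@bigfs _ _ _ _ (index_enum I) Pb (F \o h) (index_enum_uniq I)) //=.
by move=> i _; rewrite mem_index_enum.
Qed.
Arguments reindex_box {R I T Pb h A} F.
Lemma sum_sep (R : realType) (I J : finType) (P : pred I) (Q : pred J) (G : I -> R) (H : J -> R) :
  \sum_(e | P e) \sum_(f | Q f) (G e * H f) = (\sum_(e | P e) G e) * (\sum_(f | Q f) H f).
Proof. by rewrite mulr_suml; apply: eq_bigr => e _; rewrite mulr_sumr. Qed.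

Lemma assemble (R : realType) d (la lb : nat -> R) (Lam : set (d.-tuple int)) N
  (Q : 'I_d -> pred nat) (Eb : pred bool) (ca cb : bool -> R) (ta tb : 'I_d -> R)
  (h : bool * {ffun 'I_d -> 'I_N} -> d.-tuple int) :
  let Pb := fun p : bool * {ffun 'I_d -> 'I_N} => Eb p.1 && [forall i, Q i (p.2 i)] in
  Lam = h @` [set p | Pb p] ->
  (forall p q, Pb p -> Pb q -> h p = h q -> p = q) ->
  (forall p, Pb p -> lpow la (h p) = ca p.1 * \prod_i ta i ^+ (p.2 i)) ->
  (forall p, Pb p -> lpow lb (h p) = cb p.1 * \prod_i tb i ^+ (p.2 i)) ->
  (forall i, 0 < ta i /\ 0 < tb i) ->
  (forall i, exists lo hi, [/\ (lo < hi)%N, (hi < N)%N & Q i =1 (fun t => lo <= t <= hi)%N]) ->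
  \sum_(e | Eb e) (ca e ^+ 2 * cb e ^+ 2) <=
     (\sum_(e | Eb e) ca e ^+ 2) * (\sum_(e | Eb e) cb e ^+ 2) ->
  (\prod_i Num.max (1 + expR (-2 * `|ln (ta i)|)) (1 + expR (-2 * `|ln (tb i)|))) *
     \sum_(x \in Lam) (lpow la x ^+ 2 * lpow lb x ^+ 2)
  <= (\sum_(x \in Lam) lpow la x ^+ 2) * (\sum_(x \in Lam) lpow lb x ^+ 2).
Proof.
move=> Pb HA Hinj Hwa Hwb tpos Hrange HE.
rewrite (reindex_box _ HA Hinj) (reindex_box _ HA Hinj) (reindex_box _ HA Hinj).
have sq : forall (c : R) (t : 'I_d -> R) (f : {ffun 'I_d -> 'I_N}),
    (c * \prod_i t i ^+ f i) ^+ 2 = c ^+ 2 * \prod_i (t i ^+ 2) ^+ f i.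
  move=> c t f; rewrite exprMn -prodrXl; congr (_ * _).
  by apply: eq_bigr => i _; rewrite -!exprM mulnC.
rewrite [X in _ * X <= _](eq_bigr (fun p : bool * {ffun 'I_d -> 'I_N} => (ca p.1 ^+ 2 * cb p.1 ^+ 2) *
   ((\prod_i (ta i ^+ 2) ^+ p.2 i) * (\prod_i (tb i ^+ 2) ^+ p.2 i)))); last first.
  by move=> p Pp; rewrite Hwa // Hwb // !sq; ring.
rewrite [X in _ <= X * _](eq_bigr (fun p : bool * {ffun 'I_d -> 'I_N} => ca p.1 ^+ 2 * \prod_i (ta i ^+ 2) ^+ p.2 i)); last first.
  by move=> p Pp; rewrite Hwa // sq.
rewrite [X in _ <= _ * X](eq_bigr (fun p : bool * {ffun 'I_d -> 'I_N} => cb p.1 ^+ 2 * \prod_i (tb i ^+ 2) ^+ p.2 i)); last first.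
  by move=> p Pp; rewrite Hwb // sq.
pose Qf := fun f : {ffun 'I_d -> 'I_N} => [forall i, Q i (f i)].
pose FA := fun f : {ffun 'I_d -> 'I_N} => \prod_i (ta i ^+ 2) ^+ f i.
pose FB := fun f : {ffun 'I_d -> 'I_N} => \prod_i (tb i ^+ 2) ^+ f i.
rewrite /Pb -(pair_big Eb Qf (fun e f => (ca e ^+ 2 * cb e ^+ 2) * (FA f * FB f))) /=.
rewrite -(pair_big Eb Qf (fun e f => ca e ^+ 2 * FA f)) /=.
rewrite -(pair_big Eb Qf (fun e f => cb e ^+ 2 * FB f)) /=.
rewrite !sum_sep.
set E := \sum_(e | Eb e) _; set E' := \sum_(e | Eb e) _ ; set E'' := \sum_(e | Eb e) _.
set P := \prod_(i < d) _.
have Hb := @box_ineq R d N Q (fun i t => (ta i ^+ 2) ^+ t) (fun i t => (tb i ^+ 2) ^+ t)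
  (fun i => Num.max (1 + expR (-2 * `|ln (ta i)|)) (1 + expR (-2 * `|ln (tb i)|))).
have {Hb} Hb : P * (\sum_(f | Qf f) FA f * FB f) <= (\sum_(f | Qf f) FA f) * (\sum_(f | Qf f) FB f).
  apply: Hb.
  - by move=> i; rewrite le_max addr_ge0 ?ler01 ?(ltW (expR_gt0 _)).
  - by move=> i t; rewrite exprn_ge0 ?sqr_ge0.
  - by move=> i t; rewrite exprn_ge0 ?sqr_ge0.
  move=> i; have [lo [hi [lohi hiN qE]]] := Hrange i; have [ta0 tb0] := tpos i.
  exact: (@one_coord R N (Q i) lo hi (ta i) (tb i) ta0 tb0 lohi hiN qE).
have -> : P * (E * \sum_(f | Qf f) FA f * FB f) = E * (P * \sum_(f | Qf f) FA f * FB f) by ring.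
have -> : E' * (\sum_(f | Qf f) FA f) * (E'' * \sum_(f | Qf f) FB f) =
   (E' * E'') * ((\sum_(f | Qf f) FA f) * \sum_(f | Qf f) FB f) by ring.
apply: ler_pM => //.
- by rewrite sumr_ge0 // => e _; rewrite mulr_ge0 // sqr_ge0.
- rewrite mulr_ge0 ?sumr_ge0 // => [|f _].
    by apply: prodr_ge0 => i _; rewrite le_max addr_ge0 ?ler01 ?(ltW (expR_gt0 _)).
  by rewrite mulr_ge0 // prodr_ge0 // => i _; rewrite exprn_ge0 ?sqr_ge0.
Qed.

Definition loj (j m k : nat) : nat := if k == j then m else 0%N.

Lemma box_diff d j L l m n (Y : nat -> int) :
  (1 <= j <= d)%N -> (m < n)%N -> (2 <= l)%N -> (l <= L)%N ->
  ((forall k, (1 <= k <= d)%N -> 0 <= Y k <= (Lvec j L l n k)%:Z - 1) /\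
   ~ (forall k, (1 <= k <= d)%N -> 0 <= Y k <= (Lvec j L l m k)%:Z - 1)) <->
  (forall k, (1 <= k <= d)%N -> (loj j m k)%:Z <= Y k <= (Lvec j L l n k)%:Z - 1).
Proof.
move=> /andP[j1 jd] mn l2 lL; rewrite /loj /Lvec; split.
  move=> [H1 H2] k kd; have := H1 k kd.
  case: eqP => [->|kj]; last by [].
  rewrite ltnn => /andP[_ ->]; rewrite andbT.
  case: (lerP m%:Z (Y j)) => // Yj; exfalso; apply: H2 => k' kd'.
  have := H1 k' kd'; case: ifP => //; case: eqP => [->|] //.
  by move=> _ /andP[-> _] /=; lia.
move=> H; split.
  move=> k kd; have := H k kd; case: eqP => // _ /andP[h1 ->]; rewrite andbT.
  by apply: le_trans h1.
move=> H2; have := H j; rewrite j1 jd eqxx ltnn => /(_ isT) /andP[h1 _].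
have := H2 j; rewrite j1 jd eqxx ltnn => /(_ isT) /andP[_ h2].
lia.
Qed.

Definition mkx d (X : nat -> int) : d.-tuple int := [tuple X i.+1 | i < d].

Arguments mkx {d}.
Lemma coord_mk d (X : nat -> int) k : (1 <= k <= d)%N -> coord (@mkx d X) k = X k.
Proof.
move=> /andP[k1 kd]; have Hk : (k.-1 < d)%N by rewrite prednK.
by rewrite /coord -[k.-1]/(nat_of_ord (Ordinal Hk)) nth_mktuple /= prednK.
Qed.

Lemma tuple_ext d (x y : d.-tuple int) :
  (forall k, (1 <= k <= d)%N -> coord x k = coord y k) -> x = y.
Proof.
move=> H; apply: val_inj; apply: (@eq_from_nth _ 0); first by rewrite !size_tuple.
move=> i; rewrite size_tuple => id; have := H i.+1; rewrite /coord /=; apply.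
by rewrite id.
Qed.

Definition Yf d N (f : {ffun 'I_d -> 'I_N}) (k : nat) : int :=
  \sum_(i < d | i.+1 == k) (f i : nat)%:Z.
Arguments Yf {d N}.

Lemma Yf_ord d N (f : {ffun 'I_d -> 'I_N}) (i : 'I_d) : Yf f i.+1 = (f i : nat)%:Z.
Proof.
rewrite /Yf (eq_bigl (pred1 i)) ?big_pred1_eq // => i'.
Qed.

Lemma Yf_inj d N (f g : {ffun 'I_d -> 'I_N}) :
  (forall k, (1 <= k <= d)%N -> Yf f k = Yf g k) -> f = g.
Proof.
move=> H; apply/ffunP => i; apply: val_inj; have := H i.+1.
by rewrite !Yf_ord ltnS leq0n ltn_ord => /(_ isT) [].
Qed.

Lemma kord d k : (1 <= k <= d)%N -> exists i : 'I_d, k = i.+1.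
Proof.
move=> /andP[k1 kd]; have Hk : (k.-1 < d)%N by rewrite prednK.
by exists (Ordinal Hk); rewrite /= prednK.
Qed.

Lemma image_gen d N (Lam : set (d.-tuple int)) (Q : 'I_d -> pred nat) (Eb : pred bool)
 (H : bool -> (nat -> int) -> d.-tuple int) (Yc : d.-tuple int -> nat -> int)
 (ec : d.-tuple int -> bool) (lo hi : nat -> nat) :
 (forall i t, Q i t = (lo i.+1 <= t <= hi i.+1)%N) ->
 (forall k, (1 <= k <= d)%N -> (hi k <= N)%N) ->
 (forall x, Lam x <-> forall k, (1 <= k <= d)%N -> (lo k)%:Z <= Yc x k <= (hi k)%:Z) ->
 (forall e Y, Eb e -> (forall k, (1 <= k <= d)%N -> Yc (H e Y) k = Y k) /\ ec (H e Y) = e) ->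
 (forall x, Lam x -> Eb (ec x) /\ H (ec x) (Yc x) = x) ->
 (forall e Y Y', (forall k, (1 <= k <= d)%N -> Y k = Y' k) -> H e Y = H e Y') ->
 let h := fun p : bool * {ffun 'I_d -> 'I_N.+1} => H p.1 (Yf p.2) in
 Lam = h @` [set p : bool * {ffun 'I_d -> 'I_N.+1} | Eb p.1 && [forall i, Q i (p.2 i)]] /\
 (forall p q : bool * {ffun 'I_d -> 'I_N.+1}, Eb p.1 && [forall i, Q i (p.2 i)] -> Eb q.1 && [forall i, Q i (q.2 i)] ->
    h p = h q -> p = q).
Proof.
move=> QE hiN Lchar HR HR' Hext h; split.
  apply/seteqP; split.
    move=> x Lx; have [Ee Hx] := HR' x Lx.
    have Hb := (Lchar x).1 Lx.
    pose f := [ffun i : 'I_d => (inord (absz (Yc x i.+1)) : 'I_N.+1)].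
    have fE : forall i : 'I_d, (f i : nat) = absz (Yc x i.+1).
      move=> i; rewrite ffunE inordK //.
      have := Hb i.+1; rewrite ltn_ord /= => /(_ isT) /andP[h1 h2].
      have := hiN i.+1; rewrite ltn_ord /= => /(_ isT) h3.
      lia.
    exists (ec x, f); last first.
      rewrite /h /= -{2}Hx; apply: Hext => k /kord [i ->].
      rewrite Yf_ord fE gez0_abs //.
      have := Hb i.+1; rewrite ltn_ord /= => /(_ isT) /andP[h1 h2].
      lia.
    rewrite /= Ee /=; apply/forallP => i; rewrite QE fE.
    have := Hb i.+1; rewrite ltn_ord /= => /(_ isT) /andP[h1 h2].
    lia.
  move=> x [p /= /andP[Ep /forallP Qp] <-]; apply/Lchar => k /[dup] kd /kord [i ki].
  have [HY _] := HR p.1 (Yf p.2) Ep; rewrite /h HY // ki Yf_ord.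
  have := Qp i; rewrite QE => /andP[h1 h2].
  lia.
move=> [e1 f1] [e2 f2] /andP[/= E1 _] /andP[/= E2 _] /= Hh.
have [Y1 e1E] := HR e1 (Yf f1) E1; have [Y2 e2E] := HR e2 (Yf f2) E2.
rewrite /h /= in Hh.
congr pair; first by rewrite -e1E -e2E Hh.
apply: Yf_inj => k kd; by rewrite -Y1 // -Y2 // Hh.
Qed.
Lemma exprz_sum (R : realType) (b : R) (r : seq nat) (F : nat -> int) : 0 < b ->
  b ^ (\sum_(k <- r) F k) = \prod_(k <- r) b ^ F k.
Proof.
move=> b0; have ub : b \is a GRing.unit by rewrite unitfE lt0r_neq0.
by apply: (big_morph (fun z : int => b ^ z) (exprzDr ub) (expr0z b)).
Qed.

Lemma GA (R : realType) (b : R) (l : nat -> R) (v : nat -> nat) (Y : nat -> int) s d :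
  0 < b -> (forall k, (s <= k < d.+1)%N -> 0 < l k) ->
  b ^ (- \sum_(s <= k < d.+1) (v k)%:Z * Y k) * \prod_(s <= k < d.+1) l k ^ Y k =
  \prod_(s <= k < d.+1) (l k * b ^- v k) ^ Y k.
Proof.
move=> b0 l0; rewrite -sumrN exprz_sum // -big_split /=.
rewrite big_seq_cond [RHS]big_seq_cond; apply: eq_bigr => k /andP[+ _].
rewrite mem_index_iota => /l0 lk0.
have ub : b \is a GRing.unit by rewrite unitfE lt0r_neq0.
rewrite exprzMl; last 2 first.
- by rewrite unitfE lt0r_neq0.
- by rewrite unitfE invr_neq0 // expf_neq0 // lt0r_neq0.
by rewrite exprnN exprz_exp mulNr mulrC.
Qed.
Definition V1 d (v : nat -> nat) (Y : nat -> int) : int :=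
  \sum_(2 <= k < d.+1) (v k)%:Z * Y k.
Definition X1 d v (Y : nat -> int) (k : nat) : int :=
  if k == 1%N then Y 1%N - V1 d v Y else Y k.
Definition Yc1 d v (x : d.-tuple int) (k : nat) : int :=
  if k == 1%N then coord x 1 + V1 d v (coord x) else coord x k.

Arguments Yc1 {d}.
Lemma V1_ext d v (Y Y' : nat -> int) :
  (forall k, (2 <= k <= d)%N -> Y k = Y' k) -> V1 d v Y = V1 d v Y'.
Proof.
move=> H; rewrite /V1 big_nat_cond [RHS]big_nat_cond; apply: eq_bigr => k /andP[/andP[k2 kd] _].
by rewrite H //; apply/andP; split; lia.
Qed.

Lemma Vchar1 (R : realType) d v (Lv : nat -> nat) (x : d.-tuple int) : (1 <= d)%N ->
  @Vol R d false v Lv x <-> forall k, (1 <= k <= d)%N -> 0 <= Yc1 v x k <= (Lv k)%:Z - 1.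
Proof.
move=> d1; rewrite /Vol /= /Yc1 /V1; split.
  move=> [h1 [h2 h3]] k /andP[k1 kd]; case: eqP => [->|k1'].
    by rewrite h1 h2.
  have [] := h3 k; first by apply/andP; split => //; lia.
  by move=> -> ->.
move=> H; have := H 1%N; rewrite leqnn d1 eqxx => /(_ isT) /andP[h1 h2].
split => //; split => // k /andP[k2 kd]; have := H k; rewrite kd (leq_trans _ k2) //.
by rewrite gtn_eqF // => /(_ isT) /andP[-> ->].
Qed.

Lemma R1 d v (Y : nat -> int) k : (1 <= k <= d)%N -> Yc1 v (@mkx d (X1 d v Y)) k = Y k.
Proof.
move=> kd; have d1 : (1 <= 1 <= d)%N by apply/andP; split => //; lia.
have HV : V1 d v (coord (@mkx d (X1 d v Y))) = V1 d v Y.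
  apply: V1_ext => k' /andP[k2 kd']; rewrite coord_mk; last by apply/andP; split => //; lia.
  by rewrite /X1; case: eqP => //; lia.
rewrite /Yc1; case: eqP => [->|k1]; first by rewrite HV coord_mk // /X1 eqxx subrK.
by rewrite coord_mk // /X1; case: eqP.
Qed.

Lemma R1' d v (x : d.-tuple int) : mkx (X1 d v (Yc1 v x)) = x.
Proof.
apply: tuple_ext => k kd; rewrite coord_mk // /X1 /Yc1.
case: eqP => [->|k1] //.
rewrite eqxx (@V1_ext d v (fun k => if k == 1%N then _ else coord x k) (coord x)) ?addrK //.
by move=> k' /andP[k2 _]; case: eqP => //; lia.
Qed.

Lemma Ext1 d v (Y Y' : nat -> int) :
  (forall k, (1 <= k <= d)%N -> Y k = Y' k) -> mkx (X1 d v Y) = @mkx d (X1 d v Y').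
Proof.
move=> H; apply: tuple_ext => k kd; rewrite !coord_mk // /X1.
rewrite (@V1_ext d v Y Y') ?H //; last by move=> k' /andP[k2 kd']; apply: H; apply/andP; split => //; lia.
apply/andP; split => //; lia.
Qed.

Lemma W1 (R : realType) d v (l : nat -> R) (s : bool) (Y : nat -> int) :
  (1 <= d)%N -> (forall k, (1 <= k <= d)%N -> 0 < l k) ->
  lpow l (@mkx d (X1 d v Y)) = \prod_(1 <= k < d.+1) (tl false v l s k) ^ Y k.
Proof.
move=> d1 l0; rewrite /lpow big_nat_cond (eq_bigr (fun k => l k ^ X1 d v Y k)); last first.
  by move=> k /andP[kd _]; rewrite coord_mk // -ltnS.
rewrite -big_nat_cond big_ltn ?ltnS // [RHS]big_ltn ?ltnS //.
rewrite /X1 eqxx /tl /= exprzDr ?unitfE ?lt0r_neq0 ?l0 //.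
rewrite -mulrA; congr (_ * _).
rewrite big_nat_cond (eq_bigr (fun k => l k ^ Y k)); last first.
  by move=> k /andP[/andP[k2 _] _]; rewrite gtn_eqF.
rewrite -big_nat_cond /V1 GA; first last.
- by move=> k /andP[k2 kd]; apply: l0; apply/andP; split; lia.
- by apply: l0; apply/andP.
rewrite big_nat_cond [RHS]big_nat_cond; apply: eq_bigr => k /andP[/andP[k2 _] _].
by rewrite gtn_eqF.
Qed.
Definition V2 d (v : nat -> nat) (Y : nat -> int) : int :=
  \sum_(3 <= k < d.+1) (v k)%:Z * Y k.
Definition X2 d v (e : bool) (Y : nat -> int) (k : nat) : int :=
  if k == 1%N then Y 1%N - Y 2%N - V2 d v Y
  else if k == 2%N then Y 1%N + Y 2%N + (nat_of_bool e)%:Z - V2 d v Y else Y k.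
Definition S2 d v (x : d.-tuple int) : int := coord x 1 + coord x 2 + 2 * V2 d v (coord x).
Definition T2 d (x : d.-tuple int) : int := coord x 2 - coord x 1.
Definition Yc2 d v (x : d.-tuple int) (k : nat) : int :=
  if k == 1%N then (S2 d v x %/ 2)%Z else if k == 2%N then (T2 d x %/ 2)%Z else coord x k.
Definition ec2 d (x : d.-tuple int) : bool := (T2 d x %% 2)%Z == 1.
Arguments S2 {d}. Arguments T2 {d}. Arguments Yc2 {d}. Arguments ec2 {d}.

Lemma V2_ext d v (Y Y' : nat -> int) :
  (forall k, (3 <= k <= d)%N -> Y k = Y' k) -> V2 d v Y = V2 d v Y'.
Proof.
move=> H; rewrite /V2 big_nat_cond [RHS]big_nat_cond; apply: eq_bigr => k /andP[/andP[k2 kd] _].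
by rewrite H //; apply/andP; split; lia.
Qed.

Lemma div2P (S q r : int) : S = 2 * q + r -> 0 <= r < 2 -> (S %/ 2)%Z = q /\ (S %% 2)%Z = r.
Proof.
move=> HS hr; have := divz_eq S 2; have := @modz_ge0 S 2 isT; have := @ltz_pmod S 2 isT.
move: (S %/ 2)%Z (S %% 2)%Z => a b; lia.
Qed.

Lemma half_iff (R : realType) (S : int) (L : nat) :
  (0 <= S%:~R / 2 :> R) /\ (S%:~R / 2 <= L%:R - 2^-1 :> R) <-> (0 <= S <= 2 * L%:Z - 1).
Proof.
have -> : (0 <= S <= 2 * L%:Z - 1) = (0 <= S%:~R :> R) && (S%:~R <= (2 * L%:Z - 1)%:~R :> R).
  by rewrite ler0z ler_int.
rewrite rmorphB rmorphM /=.
have e2 : (2%:~R : R) = 2 by [].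
rewrite e2; split.
  by move=> [h1 h2]; apply/andP; split; lra.
by move=> /andP[h1 h2]; split; lra.
Qed.

Lemma div2_range (S : int) (L : nat) : (0 <= S <= 2 * L%:Z - 1) = (0 <= (S %/ 2)%Z <= L%:Z - 1).
Proof.
have := divz_eq S 2; have := @modz_ge0 S 2 isT; have := @ltz_pmod S 2 isT.
move: (S %/ 2)%Z (S %% 2)%Z => a b h1 h2 h3.
apply/idP/idP => /andP[h4 h5]; apply/andP; split; lia.
Qed.

Lemma Vchar2 (R : realType) d v (Lv : nat -> nat) (x : d.-tuple int) : (2 <= d)%N ->
  @Vol R d true v Lv x <-> forall k, (1 <= k <= d)%N -> 0 <= Yc2 v x k <= (Lv k)%:Z - 1.
Proof.
move=> d2.
have hS : ((S2 v x)%:~R : R) = (coord x 1)%:~R + (coord x 2)%:~R +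
    2 * (\sum_(3 <= k < d.+1) (v k)%:R * (coord x k)%:~R).
  rewrite /S2 /V2 !rmorphD rmorphM rmorph_sum /=; congr (_ + _ * _).
  by apply: eq_bigr => k _; rewrite rmorphM.
have hT : ((T2 x)%:~R : R) = (coord x 2)%:~R - (coord x 1)%:~R.
  by rewrite /T2 rmorphB.
have eA : ((coord x 1)%:~R + (coord x 2)%:~R) / 2 +
    \sum_(3 <= k < d.+1) (v k)%:R * (coord x k)%:~R = (S2 v x)%:~R / 2 :> R.
  by rewrite hS; lra.
have eB : ((coord x 2)%:~R - (coord x 1)%:~R) / 2 = (T2 x)%:~R / 2 :> R.
  by rewrite hT.
rewrite /Vol /= eA eB; split.
  move=> [h1 [h2 [h3 [h4 h5]]]] k /andP[k1 kd]; rewrite /Yc2.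
  case: eqP => [->|k1'].
    by rewrite -div2_range; apply: (proj1 (half_iff R _ _)); split.
  case: eqP => [->|k2'].
    by rewrite -div2_range; apply: (proj1 (half_iff R _ _)); split.
  have hk : (2 < k <= d)%N by apply/andP; split; lia.
  by have [-> ->] := h5 k hk.
move=> H.
have := H 1%N; rewrite /Yc2 eqxx -div2_range => /(_ ltac:(apply/andP; split => //; lia)).
move=> /(proj2 (half_iff R _ _)) [h1 h2].
have := H 2%N; rewrite /Yc2 /= -div2_range => /(_ d2).
move=> /(proj2 (half_iff R _ _)) [h3 h4].
split => //; split => //; split => //; split => // k /andP[k3 kd]; have := H k.
rewrite /Yc2 (gtn_eqF (leq_trans _ k3)) // (gtn_eqF (leq_trans _ k3)) //.
by move=> /(_ ltac:(apply/andP; split => //; lia)) /andP[-> ->].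
Qed.

Lemma coordX2_V d v e (Y : nat -> int) :
  V2 d v (coord (@mkx d (X2 d v e Y))) = V2 d v Y.
Proof.
apply: V2_ext => k' /andP[k3 kd']; rewrite coord_mk; last by apply/andP; split => //; lia.
by rewrite /X2 !gtn_eqF // (leq_trans _ k3).
Qed.

Lemma R2 d v e (Y : nat -> int) : (2 <= d)%N ->
  (forall k, (1 <= k <= d)%N -> Yc2 v (@mkx d (X2 d v e Y)) k = Y k) /\
  ec2 (@mkx d (X2 d v e Y)) = e.
Proof.
move=> d2.
have c1 : coord (@mkx d (X2 d v e Y)) 1 = Y 1%N - Y 2%N - V2 d v Y.
  by rewrite coord_mk //; apply/andP; split => //; lia.
have c2 : coord (@mkx d (X2 d v e Y)) 2 = Y 1%N + Y 2%N + (nat_of_bool e)%:Z - V2 d v Y.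
  by rewrite coord_mk.
have hS : S2 v (@mkx d (X2 d v e Y)) = 2 * Y 1%N + (nat_of_bool e)%:Z.
  by rewrite /S2 c1 c2 coordX2_V; ring.
have hT : T2 (@mkx d (X2 d v e Y)) = 2 * Y 2%N + (nat_of_bool e)%:Z.
  by rewrite /T2 c1 c2; ring.
have he : 0 <= (nat_of_bool e)%:Z < 2 by case: (e).
have [hS1 _] := div2P _ _ _ hS he; have [hT1 hT2] := div2P _ _ _ hT he.
split; last by rewrite /ec2 hT2; case: (e).
move=> k kd; rewrite /Yc2; case: eqP => [->|k1] //.
case: eqP => [->|k2] //.
rewrite coord_mk // /X2; case: eqP => // _; case: eqP => //.
Qed.

Lemma R2' d v (x : d.-tuple int) : (2 <= d)%N -> @mkx d (X2 d v (ec2 x) (Yc2 v x)) = x.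
Proof.
move=> d2.
have HV : V2 d v (Yc2 v x) = V2 d v (coord x).
  by apply: V2_ext => k /andP[k3 _]; rewrite /Yc2 !gtn_eqF // (leq_trans _ k3).
have hSd : S2 v x = coord x 1 + coord x 2 + 2 * V2 d v (coord x) by [].
have hTd : T2 x = coord x 2 - coord x 1 by [].
apply: tuple_ext => k kd; rewrite coord_mk // /X2 HV /ec2 /Yc2 /=.
have := divz_eq (S2 v x) 2; have := @modz_ge0 (S2 v x) 2 isT; have := @ltz_pmod (S2 v x) 2 isT.
have := divz_eq (T2 x) 2; have := @modz_ge0 (T2 x) 2 isT; have := @ltz_pmod (T2 x) 2 isT.
move: (S2 v x %/ 2)%Z (S2 v x %% 2)%Z (T2 x %/ 2)%Z (T2 x %% 2)%Z hSd hTd => a b a' b' hSd hTd.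
move: (S2 v x) (T2 x) (V2 d v (coord x)) hSd hTd => S T V hSd hTd h1 h2 h3 h4 h5 h6.
case: eqP => [->|k1]; first by lia.
by case: eqP => [->|k2]; first by case: eqP; lia.
Qed.

Lemma Ext2 d v e (Y Y' : nat -> int) : (2 <= d)%N ->
  (forall k, (1 <= k <= d)%N -> Y k = Y' k) -> @mkx d (X2 d v e Y) = @mkx d (X2 d v e Y').
Proof.
move=> d2 H; apply: tuple_ext => k kd; rewrite !coord_mk // /X2.
rewrite (@V2_ext d v Y Y'); last by move=> k' /andP[k2 kd']; apply: H; apply/andP; split => //; lia.
have h1 : Y 1%N = Y' 1%N by apply: H; apply/andP; split => //; lia.
case: (k =P 1%N) => [k1|k1]; first by rewrite h1 H //; apply/andP; split => //; lia.
case: (k =P 2%N) => [k2|k2]; first by rewrite h1 H //; subst k.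
by rewrite H.
Qed.

Lemma lpowX2 (R : realType) d v e (l : nat -> R) (Y : nat -> int) :
  (2 <= d)%N ->
  lpow l (@mkx d (X2 d v e Y)) =
  l 1%N ^ (Y 1%N - Y 2%N - V2 d v Y) * (l 2%N ^ (Y 1%N + Y 2%N + (nat_of_bool e)%:Z - V2 d v Y) *
    \prod_(3 <= k < d.+1) l k ^ Y k).
Proof.
move=> d2; rewrite /lpow big_nat_cond (eq_bigr (fun k => l k ^ X2 d v e Y k)); last first.
  by move=> k /andP[kd _]; rewrite coord_mk // -ltnS.
rewrite -big_nat_cond big_ltn ?ltnS; last by lia.
rewrite big_ltn ?ltnS //; congr (_ * (_ * _)).
rewrite big_nat_cond [RHS]big_nat_cond; apply: eq_bigr => k /andP[/andP[k3 _] _].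
by rewrite /X2 !gtn_eqF // (leq_trans _ k3).
Qed.


Lemma W2a (R : realType) d v e (l : nat -> R) (Y : nat -> int) :
  (2 <= d)%N -> (forall k, (1 <= k <= d)%N -> 0 < l k) -> l 2%N = 1 ->
  lpow l (@mkx d (X2 d v e Y)) = \prod_(1 <= k < d.+1) (tl true v l false k) ^ Y k.
Proof.
move=> d2 l0 l21; rewrite lpowX2 // l21 exp1rz mul1r.
have l10 : 0 < l 1%N by apply: l0; apply/andP; split => //; lia.
have u1 : l 1%N \is a GRing.unit by rewrite unitfE lt0r_neq0.
have hd1 : (1 < d.+1)%N by lia.
have hd2 : (2 < d.+1)%N by lia.
rewrite [RHS]big_ltn // [X in _ = _ * X]big_ltn //.
rewrite /tl /tl1 /=.
rewrite [X in _ = _ * (_ * X)](@eq_big_nat _ _ _ 3 d.+1 _ (fun k => (l k * l 1%N ^- v k) ^ Y k)); last first.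
  by move=> k /andP[k3 _]; rewrite !gtn_eqF // (leq_trans _ k3).
rewrite -GA //; last by move=> k /andP[k3 kd]; apply: l0; apply/andP; split; lia.
rewrite exprz_inv !exprzDr // /V2; ring.
Qed.

Lemma W2b (R : realType) d v e (l : nat -> R) (Y : nat -> int) :
  (2 <= d)%N -> (forall k, (1 <= k <= d)%N -> 0 < l k) -> l 1%N = 1 ->
  lpow l (@mkx d (X2 d v e Y)) = l 2%N ^+ e * \prod_(1 <= k < d.+1) (tl true v l true k) ^ Y k.
Proof.
move=> d2 l0 l11; rewrite lpowX2 // l11 exp1rz mul1r.
have l20 : 0 < l 2%N by apply: l0.
have u2 : l 2%N \is a GRing.unit by rewrite unitfE lt0r_neq0.
have hd1 : (1 < d.+1)%N by lia.
have hd2 : (2 < d.+1)%N by lia.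
rewrite [X in _ = _ * X]big_ltn // [X in _ = _ * (_ * X)]big_ltn //.
rewrite /tl /tl1 /=.
rewrite [X in _ = _ * (_ * (_ * X))](@eq_big_nat _ _ _ 3 d.+1 _ (fun k => (l k * l 2%N ^- v k) ^ Y k)); last first.
  by move=> k /andP[k3 _]; rewrite !gtn_eqF // (leq_trans _ k3).
rewrite -GA //; last by move=> k /andP[k3 kd]; apply: l0; apply/andP; split; lia.
rewrite !exprzDr // exprnP /V2; ring.
Qed.
Lemma prod_shift (R : realType) d (F : nat -> R) :
  \prod_(1 <= k < d.+1) F k = \prod_(i < d) F i.+1.
Proof. by rewrite big_add1 /= big_mkord. Qed.

Lemma lam_char (R : realType) d case2 v j L l m n (Yc : d.-tuple int -> nat -> int) x :
  (1 <= j <= d)%N -> (m < n)%N -> (2 <= l)%N -> (l <= L)%N ->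
  (forall Lv x, @Vol R d case2 v Lv x <-> forall k, (1 <= k <= d)%N -> 0 <= Yc x k <= (Lv k)%:Z - 1) ->
  (@Volj R d case2 v j L l n `\` @Volj R d case2 v j L l m) x <->
  forall k, (1 <= k <= d)%N -> (loj j m k)%:Z <= Yc x k <= ((Lvec j L l n k).-1)%:Z.
Proof.
move=> jd mn l2 lL Vc.
have e : forall k, ((Lvec j L l n k).-1)%:Z = (Lvec j L l n k)%:Z - 1.
  move=> k; rewrite /Lvec; case: ifP => _; first by lia.
  by case: ifP => _; lia.
under [X in _ <-> X]eq_forall do rewrite e.
rewrite -box_diff //; rewrite /Volj /=; split.
  by move=> [/Vc h1 h2]; split => // h3; apply: h2; apply/Vc.
by move=> [h1 h2]; split; [apply/Vc | move=> /Vc].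
Qed.

Lemma HE_gen (R : realType) (Eb : pred bool) (cb : bool -> R) : (exists e, Eb e) ->
  \sum_(e | Eb e) ((1 : R) ^+ 2 * cb e ^+ 2) <=
     (\sum_(e | Eb e) (1 : R) ^+ 2) * (\sum_(e | Eb e) cb e ^+ 2).
Proof.
move=> [e0 He0]; rewrite expr1n; under eq_bigr do rewrite mul1r.
apply: ler_peMl; first by rewrite sumr_ge0 // => e _; rewrite sqr_ge0.
rewrite (bigD1 e0) //= lerDl sumr_ge0 //.
Qed.

Lemma main_gen (R : realType) d case2 v (la lb : nat -> R) j L l m n (Eb : pred bool)
  (cb : bool -> R) (H : bool -> (nat -> int) -> d.-tuple int) (Yc : d.-tuple int -> nat -> int)
  (ec : d.-tuple int -> bool) :
  (1 <= j <= d)%N -> (2 <= l)%N -> (l <= L)%N -> (m < n)%N -> (2 <= n - m)%N ->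
  (forall Lv x, @Vol R d case2 v Lv x <-> forall k, (1 <= k <= d)%N -> 0 <= Yc x k <= (Lv k)%:Z - 1) ->
  (forall e Y, Eb e -> (forall k, (1 <= k <= d)%N -> Yc (H e Y) k = Y k) /\ ec (H e Y) = e) ->
  (forall x, Eb (ec x) /\ H (ec x) (Yc x) = x) ->
  (forall e Y Y', (forall k, (1 <= k <= d)%N -> Y k = Y' k) -> H e Y = H e Y') ->
  (forall e Y, Eb e -> lpow la (H e Y) = \prod_(1 <= k < d.+1) (tl case2 v la false k) ^ Y k) ->
  (forall e Y, Eb e -> lpow lb (H e Y) = cb e * \prod_(1 <= k < d.+1) (tl case2 v lb true k) ^ Y k) ->
  (forall k, (1 <= k <= d)%N -> 0 < tl case2 v la false k /\ 0 < tl case2 v lb true k) ->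
  (exists e, Eb e) ->
  forall Lam', Lam' = @Volj R d case2 v j L l n `\` @Volj R d case2 v j L l m ->
  finite_set Lam' /\
  (\prod_(i < d) Num.max (1 + expR (-2 * `|ln (tl case2 v la false i.+1)|))
                         (1 + expR (-2 * `|ln (tl case2 v lb true i.+1)|))) *
     \sum_(x \in Lam') (lpow la x ^+ 2 * lpow lb x ^+ 2)
  <= (\sum_(x \in Lam') lpow la x ^+ 2) * (\sum_(x \in Lam') lpow lb x ^+ 2).
Proof.
move=> jd l2 lL mn nm Vc HR HR' Hext Wa Wb tpos Ebne Lam' HL.
pose N := (L + l + n)%N.
pose Q := fun (i : 'I_d) (t : nat) => (loj j m i.+1 <= t <= (Lvec j L l n i.+1).-1)%N.
have hiN : forall k, (1 <= k <= d)%N -> ((Lvec j L l n k).-1 <= N)%N.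
  move=> k _; rewrite /Lvec /N; case: ifP => _; first by lia.
  by case: ifP => _; lia.
have Lc : forall x, Lam' x <-> forall k, (1 <= k <= d)%N ->
    (loj j m k)%:Z <= Yc x k <= ((Lvec j L l n k).-1)%:Z.
  by move=> x; rewrite HL; apply: lam_char.
have [HA Hinj] := @image_gen d N Lam' Q Eb H Yc ec (loj j m) (fun k => (Lvec j L l n k).-1)
  (fun i t => erefl) hiN Lc HR (fun x _ => HR' x) Hext.
split; first by rewrite HA; apply: finite_image; apply: finite_finset.
have := @assemble R d la lb Lam' N.+1 Q Eb (fun _ => 1) cb
  (fun i => tl case2 v la false i.+1) (fun i => tl case2 v lb true i.+1)
  (fun p => H p.1 (Yf p.2)) HA Hinj.
have cvt : forall (t : nat -> R) (f : {ffun 'I_d -> 'I_N.+1}),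
    \prod_(1 <= k < d.+1) t k ^ Yf f k = \prod_(i < d) t i.+1 ^+ f i.
  by move=> t f; rewrite prod_shift; apply: eq_bigr => i _; rewrite Yf_ord exprnP.
apply.
- by move=> p /andP[Ep _]; rewrite /= Wa // cvt mul1r.
- by move=> p /andP[Ep _]; rewrite /= Wb // cvt.
- by move=> i; apply: tpos; rewrite /= ltn_ord.
- move=> i; exists (loj j m i.+1), (Lvec j L l n i.+1).-1; split => //.
  + rewrite /loj /Lvec; case: eqP => [<-|ij]; first by rewrite ltnn; lia.
    by case: ifP => _; lia.
  + by rewrite ltnS; apply: hiN; rewrite /= ltn_ord.
exact: HE_gen.
Qed.

Lemma tl_pos (R : realType) d (case2 : bool) (v : nat -> nat) (l : nat -> R) (s : bool) k :
  (forall k, (1 <= k <= d)%N -> 0 < l k) -> (case2 -> (2 <= d)%N) -> (1 <= k <= d)%N ->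
  0 < tl case2 v l s k.
Proof.
move=> l0 c2 kd; have l10 : 0 < l 1%N by apply: l0; apply/andP; split => //; lia.
rewrite /tl /tl1; case: case2 c2 => /= c2.
  have l20 : 0 < l 2%N by apply: l0; apply/andP; split => //; have := c2 isT; lia.
  case: eqP => _; first by case: s.
  case: eqP => _; first by case: s => //; rewrite invr_gt0.
  by rewrite divr_gt0 ?l0 // exprn_gt0 //; case: s.
case: eqP => _ //; by rewrite divr_gt0 ?l0 // exprn_gt0.
Qed.

Lemma prod_gt1 (R : realType) n (F : 'I_n -> R) : (0 < n)%N -> (forall i, 1 < F i) ->
  1 < \prod_(i < n) F i.
Proof.
case: n F => // n F _ H; rewrite big_ord_recl.
apply: (lt_le_trans (H ord0)); rewrite ler_peMr //; first by apply: le_trans (ltW (H ord0)).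
apply: (big_ind (fun x => 1 <= x)) => //; first exact: mulr_ege1.
by move=> i _; apply: ltW.
Qed.

Theorem lemma2 (R : realType) (d : nat) (case2 : bool) (v : nat -> nat)
    (la lb : nat -> R) (j L l m n : nat) :
  setting d case2 v la lb ->
  (1 <= j <= d)%N -> (2 <= l)%N -> (l <= L)%N -> (m < n)%N -> (2 <= n - m)%N ->
  let Lam' := @Volj R d case2 v j L l n `\` @Volj R d case2 v j L l m in
  Cab la lb Lam' <= Cs la Lam' * Cs lb Lam' /\
  Cs la Lam' * Cs lb Lam' <= ctilde d case2 v la lb * Cab la lb Lam'.
Proof.
move=> [d1 [lpos Hc]] jd l2 lL mn nm Lam'.
have lapos : forall k, (1 <= k <= d)%N -> 0 < la k by move=> k /lpos [].
have lbpos : forall k, (1 <= k <= d)%N -> 0 < lb k by move=> k /lpos [].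
pose P := \prod_(i < d) Num.max (1 + expR (-2 * `|ln (tl case2 v la false i.+1)|))
                         (1 + expR (-2 * `|ln (tl case2 v lb true i.+1)|)).
have [finL key] : finite_set Lam' /\
   P * \sum_(x \in Lam') (lpow la x ^+ 2 * lpow lb x ^+ 2) <=
   (\sum_(x \in Lam') lpow la x ^+ 2) * (\sum_(x \in Lam') lpow lb x ^+ 2).
  have HL : Lam' = @Volj R d case2 v j L l n `\` @Volj R d case2 v j L l m by [].
  have HP : P = \prod_(i < d) Num.max (1 + expR (-2 * `|ln (tl case2 v la false i.+1)|))
                         (1 + expR (-2 * `|ln (tl case2 v lb true i.+1)|)) by [].
  case: case2 Hc Lam' P HL HP => /= Hc Lam' P HL ->.
    move: Hc => [d2 [_ [_ [la21 [lb11 _]]]]].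
    have := (@main_gen R d true v la lb j L l m n predT (fun e => lb 2%N ^+ e)
      (fun e Y => @mkx d (X2 d v e Y)) (Yc2 v) ec2 jd l2 lL mn nm).
    move=> /(_ _ _ _ _ _ _ _ _ Lam' HL) H; apply: H.
    - by move=> Lv x; apply: Vchar2.
    - by move=> e Y _; apply: R2.
    - by move=> x; split => //; apply: R2'.
    - by move=> e Y Y'; apply: Ext2.
    - by move=> e Y _; apply: W2a.
    - by move=> e Y _; apply: W2b.
    - by move=> k kd; split; [apply: (@tl_pos R d true v la false k lapos) | apply: (@tl_pos R d true v lb true k lbpos)].
    - by exists true.
  have := (@main_gen R d false v la lb j L l m n (fun e => ~~ e) (fun _ => 1)
      (fun e Y => @mkx d (X1 d v Y)) (Yc1 v) (fun _ => false) jd l2 lL mn nm).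
  move=> /(_ _ _ _ _ _ _ _ _ Lam' HL) H; apply: H.
  - by move=> Lv x; apply: Vchar1.
  - by move=> e Y Ee; split; [move=> k kd; apply: R1 | by case: e Ee].
  - by move=> x; split => //; apply: R1'.
  - by move=> e Y Y'; apply: Ext1.
  - by move=> e Y _; apply: W1.
  - by move=> e Y _; rewrite mul1r; apply: W1.
  - by move=> k kd; split; [apply: (@tl_pos R d false v la false k lapos) | apply: (@tl_pos R d false v lb true k lbpos)].
  - by exists false.
rewrite /Cab cab_formula // /Cs.
set Ca := \sum_(x \in Lam') _; set Cb := \sum_(x \in Lam') _.
set D := \sum_(x \in Lam') _ in key *.
have D0 : 0 <= D by apply: fsumr_ge0 => x _; rewrite mulr_ge0 // sqr_ge0.
have P1 : 1 < P.
  apply: prod_gt1 => // i; rewrite lt_max; apply/orP; left.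
  by rewrite ltrDl expR_gt0.
have ctE : ctilde d case2 v la lb = (1 - P^-1)^-1 by rewrite /ctilde prod_shift prodfV.
rewrite ctE; split; first lra.
set X := Ca * Cb in key *.
have P0 : 0 < P by apply: lt_trans P1.
have q1 : P^-1 < 1 by rewrite invf_lt1.
have q0 : 0 < P^-1 by rewrite invr_gt0.
have DX : D <= P^-1 * X.
  by rewrite -(ler_pM2l P0) mulrA mulfV ?mul1r // lt0r_neq0.
have XE : X = (1 - P^-1)^-1 * ((1 - P^-1) * X).
  by rewrite mulrA mulVf ?mul1r //; apply: lt0r_neq0; lra.
rewrite [X in X <= _]XE; apply: ler_wpM2l; first by rewrite invr_ge0; lra.
have -> : (1 - P^-1) * X = X - P^-1 * X by ring.
lra.
Qed.
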